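(* Let $r\ge2$ be an integer, $f\in C_p(\mathbb{R})$ and $c>0$. Assume that for every $n\in\mathbb{N}_0$, $$H_tf(x)=\min_{k\in\{0,1,\dots,r^n\}}q_f\Big(t,x;\frac{k}{r^n}\Big)\quad\text{for all }(t,x)\in\Big[\frac{1}{2cr^n},\infty\Big)\times[0,1].$$ Then there exists a dense subset of $[0,1]$ such that $f$ is not differentiable at any point of this subset.
   Context: $C_p(\mathbb{R})$ denotes the set of all continuous functions $f:\mathbb{R}\to\mathbb{R}$ periodic with period $1$ with $f(0)=0$; $\mathbb{N}_0=\mathbb{N}\cup\{0\}$. For such $f$, $q_f(t,x;z)=f(z)+\frac{1}{2t}(x-z)^2$ and $H_tf(x)=\inf_{z\in\mathbb{R}}q_f(t,x;z)$ for $t>0$, $x\in\mathbb{R}$. *)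

(* Defs.v *)
From Stdlib Require Import Reals List.
From Coquelicot Require Import Coquelicot.
Open Scope R_scope.

Definition Cp (f : R -> R) : Prop :=
  (forall x, continuity_pt f x) /\ (forall x, f (x + 1) = f x) /\ f 0 = 0.

Definition qf (f : R -> R) (t x z : R) : R := f z + (x - z) ^ 2 / (2 * t).

Definition Htf (f : R -> R) (t x : R) : Rbar :=
  Glb_Rbar (fun y => exists z, y = qf f t x z).

Definition qmin (f : R -> R) (r n : nat) (t x : R) : R :=
  fold_right Rmin (qf f t x 0)
    (map (fun k => qf f t x (INR k / INR (r ^ n))) (seq 0 (r ^ n + 1))).

(* Main.v *)
Require Import Defs.
From Stdlib Require Import Reals List Lra Lia.
From Coquelicot Require Import Coquelicot.
Open Scope R_scope.
From Stdlib Require Import Lra Lia.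

Definition ismin (f : R -> R) t x z := forall w, qf f t x z <= qf f t x w.

Lemma fold_min_in (g : nat -> R) (a : R) (l : list nat) :
  fold_right Rmin a (map g l) = a \/ exists k, In k l /\ fold_right Rmin a (map g l) = g k.
Proof.
  induction l as [|k l IH]; simpl; [now left|].
  destruct (Rle_dec (g k) (fold_right Rmin a (map g l))).
  - rewrite Rmin_left by exact r. right; exists k; split; [left; reflexivity| reflexivity].
  - rewrite Rmin_right by lra. destruct IH as [IH|[k' [Hk' IH]]].
    + left; exact IH.
    + right; exists k'; split; [right; exact Hk'| exact IH].
Qed.

Lemma qmin_grid f r n t x : exists k, (k <= r ^ n)%nat /\
  qmin f r n t x = qf f t x (INR k / INR (r ^ n)).
Proof.
  unfold qmin.
  destruct (fold_min_in (fun k => qf f t x (INR k / INR (r ^ n))) (qf f t x 0) (seq 0 (r ^ n + 1)))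
    as [E|[k [Hk E]]].
  - exists 0%nat; split; [lia|]. rewrite E. simpl. unfold Rdiv. rewrite Rmult_0_l. reflexivity.
  - exists k; split; [|exact E]. apply in_seq in Hk. lia.
Qed.

Lemma glb_min f t x v : Htf f t x = Finite v -> forall w, v <= qf f t x w.
Proof.
  intros E w.
  pose proof (Glb_Rbar_correct (fun y => exists z, y = qf f t x z)) as [H _].
  unfold Htf in E. rewrite E in H.
  exact (H (qf f t x w) (ex_intro _ w eq_refl)).
Qed.

Lemma ismin_mono f t x1 x2 z1 z2 : 0 < t -> x1 < x2 ->
  ismin f t x1 z1 -> ismin f t x2 z2 -> z1 <= z2.
Proof.
  intros Ht Hx H1 H2. specialize (H1 z2). specialize (H2 z1). unfold qf, Rdiv in *.
  set (u := / (2 * t)) in *.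
  assert (0 < u) by (unfold u; apply Rinv_0_lt_compat; lra).
  assert (0 < u * (x2 - x1)) by nra.
  destruct (Rle_dec z1 z2); auto.
  exfalso. assert (0 < u * (x2 - x1) * (z1 - z2)) by nra. nra.
Qed.

Lemma nondiff f t x1 x2 z : 0 < t -> x1 < x2 ->
  ismin f t x1 z -> ismin f t x2 z -> ~ ex_derive f z.
Proof.
  intros Ht Hx H1 H2 [l Hl]. apply is_derive_Reals in Hl.
  assert (He : 0 < (x2 - x1) / (4 * t)) by (apply Rdiv_lt_0_compat; lra).
  destruct (Hl _ He) as [d Hd].
  set (h := Rmin (d / 2) ((x2 - x1) / 2)).
  assert (Hh0 : 0 < h) by (unfold h; apply Rmin_glb_lt; pose proof (cond_pos d); lra).
  assert (Hhd : h < d) by (unfold h; pose proof (Rmin_l (d/2) ((x2-x1)/2)); pose proof (cond_pos d); lra).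
  assert (Hhx : h <= (x2 - x1) / 2) by apply Rmin_r.
  assert (A1 := Hd h ltac:(lra) ltac:(rewrite Rabs_pos_eq; lra)).
  assert (A2 := Hd (- h) ltac:(lra) ltac:(rewrite Rabs_Ropp, Rabs_pos_eq; lra)).
  set (D1 := (f (z + h) - f z) / h) in *.
  set (D2 := (f (z + - h) - f z) / - h) in *.
  assert (E1 : f (z + h) - f z = D1 * h) by (unfold D1; field; lra).
  assert (E2 : f (z + - h) - f z = - h * D2) by (unfold D2; field; lra).
  specialize (H2 (z + h)). specialize (H1 (z + - h)). unfold qf in H1, H2.
  set (u := / (2 * t)).
  assert (Hu : 0 < u) by (unfold u; apply Rinv_0_lt_compat; lra).
  assert (He' : (x2 - x1) / (4 * t) = (x2 - x1) * u / 2) by (unfold u; field; lra).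
  rewrite He' in A1, A2.
  assert (B2 : D1 * h >= h * (2 * (x2 - z) - h) * u).
  { replace ((x2 - (z + h)) ^ 2 / (2 * t)) with ((x2 - (z + h)) ^ 2 * u) in H2 by (unfold u; field; lra).
    replace ((x2 - z) ^ 2 / (2 * t)) with ((x2 - z) ^ 2 * u) in H2 by (unfold u; field; lra).
    nra. }
  assert (B1 : - h * D2 >= - h * (2 * (x1 - z) + h) * u).
  { replace ((x1 - (z + - h)) ^ 2 / (2 * t)) with ((x1 - (z + - h)) ^ 2 * u) in H1 by (unfold u; field; lra).
    replace ((x1 - z) ^ 2 / (2 * t)) with ((x1 - z) ^ 2 * u) in H1 by (unfold u; field; lra).
    nra. }
  assert (C2 : D1 >= (2 * (x2 - z) - h) * u) by nra.
  assert (C1 : D2 <= (2 * (x1 - z) + h) * u) by nra.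
  apply Rabs_def2 in A1. apply Rabs_def2 in A2.
  assert (0 <= u * ((x2 - x1) / 2 - h)) by (apply Rmult_le_pos; lra).
  nra.
Qed.

Theorem theorem4p3 (r : nat) (f : R -> R) (c : R) :
  (2 <= r)%nat -> Cp f -> 0 < c ->
  (forall (n : nat) (t x : R),
      1 / (2 * c * INR (r ^ n)) <= t -> 0 <= x <= 1 ->
      Htf f t x = Finite (qmin f r n t x)) ->
  exists D : R -> Prop,
    (forall x, D x -> 0 <= x <= 1) /\
    (forall x, 0 <= x <= 1 -> forall eps, 0 < eps -> exists d, D d /\ Rabs (d - x) < eps) /\
    (forall x, D x -> ~ ex_derive f x).
Proof.
  intros Hr Hf Hc H.
  exists (fun d => 0 <= d <= 1 /\ ~ ex_derive f d).
  split; [tauto|]. split; [|tauto].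
  intros x0 Hx0 eps Heps.
  destruct Hf as [Hcont _].
  destruct (continuity_ab_maj f 0 1 ltac:(lra) (fun c _ => Hcont c)) as [xM [HM HxM]].
  destruct (continuity_ab_min f 0 1 ltac:(lra) (fun c _ => Hcont c)) as [xm [Hm Hxm]].
  set (M := f xM) in *. set (m := f xm) in *.
  assert (Mm : m <= M) by (pose proof (HM 0 ltac:(lra)); pose proof (Hm 0 ltac:(lra)); lra).
  assert (Hq : 0 < c * eps ^ 2 / (4 * (M - m + 1))).
  { apply Rdiv_lt_0_compat; [|lra]. apply Rmult_lt_0_compat; [lra|]. nra. }
  destruct (archimed_cor1 _ Hq) as [n [Hn Hnpos]].
  set (N := (r ^ n)%nat).
  assert (HnN : (n < N)%nat) by (apply Nat.pow_gt_lin_r; lia).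
  set (RN := INR N).
  assert (HRN : INR n < RN) by (apply lt_INR; exact HnN).
  assert (Hn0 : 0 < INR n) by (apply lt_0_INR; exact Hnpos).
  assert (HiRN : / RN < / INR n) by (apply Rinv_lt_contravar; nra).
  set (t := 1 / (2 * c * RN)).
  assert (Ht : 0 < t) by (unfold t; apply Rdiv_lt_0_compat; nra).
  assert (Hkey : 2 * t * (M - m) < (eps / 2) ^ 2).
  { assert (E : 2 * t * (M - m) = (M - m) / c * / RN) by (unfold t; field; nra).
    rewrite E.
    assert (0 < / RN) by (apply Rinv_0_lt_compat; nra).
    assert (0 <= (M - m) / c) by (apply Rdiv_le_0_compat; lra).
    assert (E2 : (M - m + 1) / c * (c * eps ^ 2 / (4 * (M - m + 1))) = (eps/2)^2) by (field; lra).
    assert ((M - m) / c * / RN <= (M - m + 1) / c * / RN).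
    { apply Rmult_le_compat_r; [lra|]. unfold Rdiv. apply Rmult_le_compat_r; [left; apply Rinv_0_lt_compat; lra|lra]. }
    assert ((M - m + 1) / c * / RN < (M - m + 1) / c * (c * eps ^ 2 / (4 * (M - m + 1)))).
    { apply Rmult_lt_compat_l; [apply Rdiv_lt_0_compat; lra| lra]. }
    lra. }
  assert (Hgrid : forall x, 0 <= x <= 1 -> exists k, (k <= N)%nat /\ ismin f t x (INR k / RN)).
  { intros x Hx. destruct (qmin_grid f r n t x) as [k [Hk E]].
    exists k; split; [exact Hk|]. intros w.
    replace (qf f t x (INR k / RN)) with (qmin f r n t x) by exact E. apply (glb_min f t x). apply H; [apply Rle_refl|exact Hx]. }
  assert (Hgr01 : forall k, (k <= N)%nat -> 0 <= INR k / RN <= 1).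
  { intros k Hk. apply le_INR in Hk. fold RN in Hk. pose proof (pos_INR k). split.
    - apply Rdiv_le_0_compat; lra.
    - apply (Rmult_le_reg_r RN); [lra|]. unfold Rdiv. rewrite Rmult_assoc, Rinv_l; lra. }
  assert (Hdist : forall x z, 0 <= x <= 1 -> 0 <= z <= 1 -> ismin f t x z -> Rabs (z - x) < eps / 2).
  { intros x z Hx Hz Hmin. specialize (Hmin x). unfold qf in Hmin.
    replace ((x - x) ^ 2 / (2 * t)) with 0 in Hmin by (field; lra).
    pose proof (HM x Hx). pose proof (Hm z Hz).
    assert (Hsq : (x - z) ^ 2 <= 2 * t * (M - m)).
    { assert (A : (x - z) ^ 2 / (2 * t) <= M - m) by lra.
      apply (Rmult_le_compat_r (2 * t)) in A; [|lra].
      replace ((x - z) ^ 2 / (2 * t) * (2 * t)) with ((x - z) ^ 2) in A by (field; lra). lra. }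
    unfold Rabs; destruct (Rcase_abs (z - x)); nra. }
  set (mm := Rmin (eps / 2) (1 / 2)).
  assert (Hmm : 0 < mm /\ mm <= eps / 2 /\ mm <= 1 / 2).
  { unfold mm; split; [apply Rmin_glb_lt; lra|split; [apply Rmin_l|apply Rmin_r]]. }
  set (s := mm / INR (S N)).
  assert (HSN : 0 < INR (S N)) by (apply lt_0_INR; lia).
  assert (Hs : 0 < s) by (unfold s; apply Rdiv_lt_0_compat; lra).
  set (a := if Rle_dec x0 (1 / 2) then x0 else x0 - mm).
  set (xs := fun i : nat => a + INR i * s).
  assert (Hxs : forall i, (i <= S N)%nat -> 0 <= xs i <= 1 /\ Rabs (xs i - x0) <= eps / 2).
  { intros i Hi. apply le_INR in Hi. pose proof (pos_INR i).
    assert (Hb : 0 <= INR i * s <= mm).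
    { split; [apply Rmult_le_pos; lra|].
      unfold s. replace (INR i * (mm / INR (S N))) with (mm * (INR i / INR (S N))) by (field; lra).
      rewrite <- (Rmult_1_r mm) at 2. apply Rmult_le_compat_l; [lra|].
      apply (Rmult_le_reg_r (INR (S N))); [lra|]. unfold Rdiv. rewrite Rmult_assoc, Rinv_l; lra. }
    unfold xs, a. destruct (Rle_dec x0 (1/2)); split; try (unfold Rabs; destruct Rcase_abs); lra. }
  set (Found := exists z, 0 <= z <= 1 /\ Rabs (z - x0) < eps /\
                  exists x1 x2, x1 < x2 /\ ismin f t x1 z /\ ismin f t x2 z).
  assert (Hind : forall i, (i <= S N)%nat -> Found \/
            exists k, (i <= k)%nat /\ (k <= N)%nat /\ ismin f t (xs i) (INR k / RN)).
  { induction i as [|i IH]; intros Hi.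
    - destruct (Hgrid (xs 0%nat) (proj1 (Hxs 0%nat ltac:(lia)))) as [k [Hk Hmk]].
      right; exists k; repeat split; auto; lia.
    - destruct (IH ltac:(lia)) as [F|[k [Hik [HkN Hmk]]]]; [left; exact F|].
      destruct (Hgrid (xs (S i)) (proj1 (Hxs (S i) Hi))) as [k' [Hk' Hmk']].
      assert (Hlt : xs i < xs (S i)) by (unfold xs; rewrite S_INR; nra).
      destruct (Nat.eq_dec k k') as [<-|Hne].
      + left. exists (INR k / RN). split; [apply Hgr01; exact HkN|]. split.
        * pose proof (Hdist (xs i) _ (proj1 (Hxs i ltac:(lia))) (Hgr01 k HkN) Hmk).
          pose proof (proj2 (Hxs i ltac:(lia))).
          apply Rle_lt_trans with (Rabs (INR k / RN - xs i) + Rabs (xs i - x0)).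
          -- replace (INR k / RN - x0) with ((INR k / RN - xs i) + (xs i - x0)) by ring.
             apply Rabs_triang.
          -- lra.
        * exists (xs i), (xs (S i)). auto.
      + right. exists k'. split; [|split; auto].
        pose proof (ismin_mono f t _ _ _ _ Ht Hlt Hmk Hmk') as Hz.
        assert (INR k <= INR k').
        { apply (Rmult_le_reg_r (/ RN)); [apply Rinv_0_lt_compat; lra|]. exact Hz. }
        apply INR_le in H0. lia. }
  destruct (Hind (S N) (Nat.le_refl _)) as [F|[k [H1 [H2 _]]]]; [|lia].
  destruct F as [z [Hz [Hzx [x1 [x2 [Hx12 [Hm1 Hm2]]]]]]].
  exists z. split; [|exact Hzx]. split; [exact Hz|].
  exact (nondiff f t x1 x2 z Ht Hx12 Hm1 Hm2).
Qed.
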